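(* Let $T$ be the monad on $\mathsf{Set}$ generated by an algebraic theory (a signature of operation symbols with finite arities together with a set of equations) none of whose equations is a drop equation. Then the underlying functor of $T$ preserves pullbacks of monomorphisms (in particular it preserves monomorphisms). Consequently, if $\rho$ is an uncountable regular ordinal, then $T$ preserves $\rho^{\mathrm{op}}$-indexed limits, i.e. for every functor $X:\rho^{\mathrm{op}}\to\mathsf{Set}$ the canonical map $T(\lim X) \to \lim T(X)$ is a bijection.
   Context: A signature is a set $\Sigma$ of operation symbols, each with an arity $n \in \mathbb{N}$. For a set $X$, the set $\mathsf{Tm}(X)$ of terms is defined inductively: each $x\in X$ is a term, and if $\mathsf{op}\in\Sigma$ has arity $n$ and $t_1,\dots,t_n \in \mathsf{Tm}(X)$ then $\mathsf{op}(t_1,\dots,t_n) \in \mathsf{Tm}(X)$. An equation is a pair $(t,s)$ of terms in some $\mathsf{Tm}(X)$; an algebraic theory is a signature with a set of equations. The generated monad is $T(X) = \mathsf{Tm}(X)/\sim$, where $\sim$ is the smallest congruence on $\mathsf{Tm}(X)$ containing all substitution instances of the equations; $T$ acts on maps by substituting variables. An equation $(t,s)$ is a drop equation if the sets of free variables of $t$ and $s$ differ. $T$ preserves pullbacks of monomorphisms if it maps every pullback square in $\mathsf{Set}$ one of whose legs is a monomorphism (specifically, pullbacks of an inclusion $Z \subseteq Y$ along any map $f: X\to Y$) to a pullback square. An ordinal $\rho$ is regular if it is a limit ordinal equal to its own cofinality. *)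

(* Defs.v *)
From Stdlib Require Vectors.Fin.


Record signature := Signature { op : Type ; arity : op -> nat }.

Inductive Tm (S : signature) (X : Type) : Type :=
| var : X -> Tm S X
| app : forall o : op S, (Fin.t (arity S o) -> Tm S X) -> Tm S X.
Arguments var {S X} _.
Arguments app {S X} _ _.

Fixpoint subst (S : signature) (X Y : Type) (sg : X -> Tm S Y) (t : Tm S X)
  : Tm S Y :=
  match t with
  | var x => sg x
  | app o ts => app o (fun i => subst S X Y sg (ts i))
  end.

Arguments subst {S X Y} sg t.

Definition Tm_map (S : signature) (X Y : Type) (f : X -> Y) (t : Tm S X)
  : Tm S Y := subst (fun x => var (f x)) t.
Arguments Tm_map {S X Y} f t.

Fixpoint occurs (S : signature) (X : Type) (x : X) (t : Tm S X) : Prop :=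
  match t with
  | var y => y = x
  | app o ts => exists i, occurs S X x (ts i)
  end.
Arguments occurs {S X} x t.

Record theory := Theory {
  sig : signature ;
  eqn : Type ;
  evars : eqn -> Type ;
  lhs : forall e, Tm sig (evars e) ;
  rhs : forall e, Tm sig (evars e) }.

Definition drop_equation (Th : theory) (e : eqn Th) : Prop :=
  ~ (forall x : evars Th e, occurs x (lhs Th e) <-> occurs x (rhs Th e)).

Inductive teq (Th : theory) (X : Type) : Tm (sig Th) X -> Tm (sig Th) X -> Prop :=
| teq_ax : forall e (sg : evars Th e -> Tm (sig Th) X),
    teq Th X (subst sg (lhs Th e)) (subst sg (rhs Th e))
| teq_refl : forall t, teq Th X t t
| teq_sym : forall t s, teq Th X t s -> teq Th X s t
| teq_trans : forall t s u, teq Th X t s -> teq Th X s u -> teq Th X t u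
| teq_cong : forall o (ts ss : Fin.t (arity (sig Th) o) -> Tm (sig Th) X),
    (forall i, teq Th X (ts i) (ss i)) -> teq Th X (app o ts) (app o ss).

Arguments teq Th {X} t s.

(** T(X) = Tm(X)/teq. We work with representatives: two terms denote the
    same element of T(X) iff they are [teq]-related, and T(f) is induced
    by [Tm_map f]. *)

(** The pullback is P = {x | Z (f x)} with legs the inclusion P -> X and
    the restriction P -> {y | Z y} of f. Preservation means the canonical
    map T(P) -> T(X) x_{T(Y)} T(Z) is a bijection. *)
Definition preserves_pullbacks_of_monos (Th : theory) : Prop :=
  forall (X Y : Type) (Z : Y -> Prop) (f : X -> Y),
  let P := { x : X | Z (f x) } in
  let pX : P -> X := fun p => proj1_sig p in
  let pZ : P -> { y : Y | Z y } := fun p => exist Z (f (proj1_sig p)) (proj2_sig p) in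
  let iZ : { y : Y | Z y } -> Y := fun z => proj1_sig z in
  (forall p q : Tm (sig Th) P,
      teq Th (Tm_map pX p) (Tm_map pX q) ->
      teq Th (Tm_map pZ p) (Tm_map pZ q) ->
      teq Th p q) /\
  (forall (u : Tm (sig Th) X) (v : Tm (sig Th) { y : Y | Z y }),
      teq Th (Tm_map f u) (Tm_map iZ v) ->
      exists p : Tm (sig Th) P,
        teq Th (Tm_map pX p) u /\ teq Th (Tm_map pZ p) v).

Definition preserves_monos (Th : theory) : Prop :=
  forall (X Y : Type) (f : X -> Y),
  (forall x x', f x = f x' -> x = x') ->
  forall t s : Tm (sig Th) X,
    teq Th (Tm_map f t) (Tm_map f s) -> teq Th t s.

(** Ordinals, presented as strict well-orders (O, lt). *)
Definition is_well_order (O : Type) (lt : O -> O -> Prop) : Prop :=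
  well_founded lt /\
  (forall a b c, lt a b -> lt b c -> lt a c) /\
  (forall a b, lt a b \/ a = b \/ lt b a).

Definition ole (O : Type) (lt : O -> O -> Prop) (a b : O) : Prop :=
  lt a b \/ a = b.
Arguments ole {O} lt a b.

Arguments is_well_order {O} lt.

Definition is_limit (O : Type) (lt : O -> O -> Prop) : Prop :=
  (exists a : O, True) /\ (forall a, exists b, lt a b).

Arguments is_limit {O} lt.

Definition cofinal (O : Type) (lt : O -> O -> Prop) (C : O -> Prop) : Prop :=
  forall a, exists c, C c /\ ole lt a c.

Arguments cofinal {O} lt C.

Definition order_iso_sub (O : Type) (lt : O -> O -> Prop) (C : O -> Prop) : Prop :=
  exists f : { c : O | C c } -> O,
    (forall x y, f x = f y -> x = y) /\
    (forall b, exists x, f x = b) /\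
    (forall x y, lt (proj1_sig x) (proj1_sig y) <-> lt (f x) (f y)).

Arguments order_iso_sub {O} lt C.

(** rho equals its cofinality: every cofinal subset has order type rho
    (the cofinality being the least order type of a cofinal subset). *)
Definition is_regular (O : Type) (lt : O -> O -> Prop) : Prop :=
  is_well_order lt /\ is_limit lt /\
  forall C : O -> Prop, cofinal lt C -> order_iso_sub lt C.

Arguments is_regular {O} lt.

Definition uncountable (O : Type) : Prop :=
  ~ exists g : O -> nat, forall a b, g a = g b -> a = b.

(** A functor X : rho^op -> Set: sets X a with restriction maps
    r a b : X b -> X a for a <= b. *)
Definition is_op_functor (O : Type) (lt : O -> O -> Prop) (X : O -> Type)
  (r : forall a b, ole lt a b -> X b -> X a) : Prop :=
  (forall a (h : ole lt a a) x, r a a h x = x) /\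
  (forall a b c (hab : ole lt a b) (hbc : ole lt b c) (hac : ole lt a c) x,
      r a b hab (r b c hbc x) = r a c hac x).

Arguments is_op_functor {O lt X} r.

Definition lim (O : Type) (lt : O -> O -> Prop) (X : O -> Type)
  (r : forall a b, ole lt a b -> X b -> X a) : Type :=
  { x : forall a, X a | forall a b (h : ole lt a b), r a b h (x b) = x a }.

Arguments lim {O lt X} r.

(** T preserves the limit of X: the canonical map T(lim X) -> lim T(X),
    t |-> (T(pi_a) t)_a, is a bijection. *)
Definition preserves_limit (Th : theory) (O : Type) (lt : O -> O -> Prop)
  (X : O -> Type) (r : forall a b, ole lt a b -> X b -> X a) : Prop :=
  let pi : forall a, lim r -> X a := fun a x => proj1_sig x a in
  (forall t s : Tm (sig Th) (lim r),
      (forall a, teq Th (Tm_map (pi a) t) (Tm_map (pi a) s)) ->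
      teq Th t s) /\
  (forall u : forall a, Tm (sig Th) (X a),
      (forall a b (h : ole lt a b), teq Th (Tm_map (r a b h) (u b)) (u a)) ->
      exists t : Tm (sig Th) (lim r),
        forall a, teq Th (Tm_map (pi a) t) (u a)).
Arguments preserves_limit Th {O lt X} r.

(* Main.v *)
From Stdlib Require Import Classical ClassicalEpsilon FunctionalExtensionality ProofIrrelevance List Lia.
Require Import Defs.

Lemma subst_subst (S : signature) (X Y W : Type) (g : X -> Tm S Y) (h : Y -> Tm S W) (t : Tm S X) :
  subst h (subst g t) = subst (fun x => subst h (g x)) t.
Proof. induction t as [x|o ts IH]; simpl; auto. f_equal; apply functional_extensionality; auto. Qed.

Lemma subst_ext_occ (S : signature) (X Y : Type) (g h : X -> Tm S Y) (t : Tm S X) :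
  (forall x, occurs x t -> g x = h x) -> subst g t = subst h t.
Proof. induction t as [x|o ts IH]; simpl; intro H; auto.
  f_equal; apply functional_extensionality; intro i; apply IH; intros; apply H; eauto. Qed.

Lemma subst_var_id (S : signature) (X : Type) (t : Tm S X) : subst (fun x => var x) t = t.
Proof. induction t as [x|o ts IH]; simpl; auto. f_equal; apply functional_extensionality; auto. Qed.

Lemma occurs_subst (S : signature) (X Y : Type) (g : X -> Tm S Y) (t : Tm S X) (y : Y) :
  occurs y (subst g t) <-> exists x, occurs x t /\ occurs y (g x).
Proof. induction t as [x|o ts IH]; simpl.
  - split; [intro; exists x; auto | intros [x' [-> H]]; auto].
  - split.
    + intros [i Hi]. apply IH in Hi. destruct Hi as [x [H1 H2]]. eauto.
    + intros [x [[i Hi] H2]]. exists i. apply IH. eauto.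
Qed.

Lemma occurs_map (S : signature) (X Y : Type) (f : X -> Y) (t : Tm S X) (y : Y) :
  occurs y (Tm_map f t) <-> exists x, occurs x t /\ f x = y.
Proof. unfold Tm_map. rewrite occurs_subst. simpl. split; intros [x [H1 H2]]; eauto. Qed.

Lemma map_map (S : signature) (X Y W : Type) (f : X -> Y) (g : Y -> W) (t : Tm S X) :
  Tm_map g (Tm_map f t) = Tm_map (fun x => g (f x)) t.
Proof. unfold Tm_map. rewrite subst_subst. reflexivity. Qed.

Lemma subst_map (S : signature) (X Y W : Type) (f : X -> Y) (g : Y -> Tm S W) (t : Tm S X) :
  subst g (Tm_map f t) = subst (fun x => g (f x)) t.
Proof. unfold Tm_map. rewrite subst_subst. reflexivity. Qed.

Lemma teq_subst (Th : theory) (X Y : Type) (h : X -> Tm (sig Th) Y) (t s : Tm (sig Th) X) :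
  teq Th t s -> teq Th (subst h t) (subst h s).
Proof. induction 1.
  - rewrite !subst_subst. apply teq_ax.
  - apply teq_refl.
  - apply teq_sym; auto.
  - eapply teq_trans; eauto.
  - simpl. apply teq_cong. auto.
Qed.

Lemma teq_map (Th : theory) (X Y : Type) (f : X -> Y) (t s : Tm (sig Th) X) :
  teq Th t s -> teq Th (Tm_map f t) (Tm_map f s).
Proof. apply teq_subst. Qed.

Lemma teq_occ (Th : theory) (no_drop : forall e : eqn Th, ~ drop_equation Th e)
  (X : Type) (t s : Tm (sig Th) X) : teq Th t s -> forall x, occurs x t <-> occurs x s.
Proof. induction 1; intro x.
  - rewrite !occurs_subst. pose proof (no_drop e) as H. unfold drop_equation in H.
    apply NNPP in H. split; intros [y [H1 H2]]; exists y; split; auto; apply H; auto.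
  - tauto.
  - rewrite IHteq; tauto.
  - rewrite IHteq1; auto.
  - simpl. split; intros [i Hi]; exists i; apply H0; auto.
Qed.

Lemma retract_inj (Th : theory) (X Y : Type) (g : X -> Y) (t s : Tm (sig Th) X) :
  (forall x x', (occurs x t \/ occurs x s) -> (occurs x' t \/ occurs x' s) -> g x = g x' -> x = x') ->
  teq Th (Tm_map g t) (Tm_map g s) -> teq Th t s.
Proof.
  intros Hinj Heq.
  set (h := fun y : Y => match excluded_middle_informative (exists x, (occurs x t \/ occurs x s) /\ g x = y) with
            | left H => var (proj1_sig (constructive_indefinite_description _ H))
            | right _ => t end).
  assert (Hh : forall x, (occurs x t \/ occurs x s) -> h (g x) = var x).
  { intros x Hx. unfold h. destruct excluded_middle_informative as [H|H].
    - destruct constructive_indefinite_description as [x' [H1 H2]]. simpl. f_equal. apply Hinj; auto.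
    - exfalso; apply H; eauto. }
  apply (teq_subst Th _ _ h) in Heq. rewrite !subst_map in Heq.
  rewrite (subst_ext_occ _ _ _ _ (fun x => var x) t) in Heq by (intros; apply Hh; auto).
  rewrite (subst_ext_occ _ _ _ _ (fun x => var x) s) in Heq by (intros; apply Hh; auto).
  rewrite !subst_var_id in Heq. exact Heq.
Qed.

Fixpoint restr (S : signature) (X : Type) (Q : X -> Prop) (t : Tm S X) :
  (forall x, occurs x t -> Q x) -> Tm S {x : X | Q x} :=
  match t return (forall x, occurs x t -> Q x) -> Tm S {x : X | Q x} with
  | var y => fun H => var (exist Q y (H y eq_refl))
  | app o ts => fun H => app o (fun i => restr S X Q (ts i) (fun x hx => H x (ex_intro _ i hx)))
  end.

Lemma restr_map (S : signature) (X : Type) (Q : X -> Prop) (t : Tm S X) H :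
  Tm_map (fun p => proj1_sig p) (restr S X Q t H) = t.
Proof. induction t as [x|o ts IH]; simpl; auto. unfold Tm_map in *; simpl. f_equal; apply functional_extensionality; intro i. apply IH. Qed.

Lemma restr_subst (S : signature) (X Y : Type) (Q : X -> Prop) (t : Tm S X) H
  (g : X -> Tm S Y) (K : {x : X | Q x} -> Y) :
  (forall y (Hy : Q y), occurs y t -> g y = var (K (exist Q y Hy))) ->
  subst g t = Tm_map K (restr S X Q t H).
Proof. unfold Tm_map in *. induction t as [x|o ts IH]; simpl; intro HK.
  - apply HK. reflexivity.
  - f_equal; apply functional_extensionality; intro i. apply IH. intros; apply HK; eauto.
Qed.

Lemma sig_inj (A : Type) (Q : A -> Prop) (x y : {a : A | Q a}) : proj1_sig x = proj1_sig y -> x = y.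
Proof. destruct x, y; simpl; intros ->. f_equal; apply proof_irrelevance. Qed.

Lemma monos_ok (Th : theory) : preserves_monos Th.
Proof. intros X Y f Hf t s H. apply (retract_inj Th _ _ f); auto. Qed.

Lemma pb_ok (Th : theory) (no_drop : forall e : eqn Th, ~ drop_equation Th e) :
  preserves_pullbacks_of_monos Th.
Proof.
  intros X Y Z f P pX pZ iZ. split.
  - intros p q H1 _. apply (retract_inj Th _ _ pX); auto. intros; apply sig_inj; auto.
  - intros u v H.
    assert (Hocc : forall x, occurs x u -> Z (f x)).
    { intros x Hx. assert (H2 : occurs (f x) (Tm_map f u)) by (apply occurs_map; eauto).
      apply (teq_occ Th no_drop _ _ _ H) in H2. apply occurs_map in H2.
      destruct H2 as [z [_ Hz]]. rewrite <- Hz. exact (proj2_sig z). }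
    exists (restr _ X (fun x => Z (f x)) u Hocc). split.
    + unfold pX. rewrite (restr_map _ X (fun x => Z (f x))). apply teq_refl.
    + apply (retract_inj Th _ _ iZ). { intros; apply sig_inj; auto. }
      rewrite map_map. unfold iZ, pZ; simpl.
      replace (Tm_map (fun x : P => f (proj1_sig x)) (restr (sig Th) X (fun x : X => Z (f x)) u Hocc))
        with (Tm_map f (Tm_map (fun x : P => proj1_sig x) (restr (sig Th) X (fun x : X => Z (f x)) u Hocc)))
        by (rewrite map_map; reflexivity).
      rewrite (restr_map _ X (fun x => Z (f x))). exact H.
Qed.

Lemma wf_irrefl (O : Type) (lt : O -> O -> Prop) : well_founded lt -> forall a, ~ lt a a.
Proof. intros wf a. induction (wf a) as [a _ IH]. intro H. exact (IH a H H). Qed.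

Lemma ole_refl (O : Type) (lt : O -> O -> Prop) a : ole lt a a.
Proof. right; reflexivity. Qed.

Lemma ole_trans (O : Type) (lt : O -> O -> Prop) : is_well_order lt ->
  forall a b c, ole lt a b -> ole lt b c -> ole lt a c.
Proof. intros [_ [tr _]] a b c [H1| ->] [H2| ->]; unfold ole; eauto. Qed.

Lemma ole_total (O : Type) (lt : O -> O -> Prop) : is_well_order lt ->
  forall a b, ole lt a b \/ ole lt b a.
Proof. intros [_ [_ tot]] a b. destruct (tot a b) as [H|[H|H]]; unfold ole; auto. Qed.

Lemma ole_ub (O : Type) (lt : O -> O -> Prop) : is_well_order lt ->
  forall a b, exists c, ole lt a c /\ ole lt b c.
Proof. intros W a b. destruct (ole_total O lt W a b); [exists b|exists a]; split; auto using ole_refl. Qed.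

Lemma lt_ole_false (O : Type) (lt : O -> O -> Prop) : is_well_order lt ->
  forall a b, lt a b -> ole lt b a -> False.
Proof. intros W a b H1 [H2| ->].
  - destruct W as [wf [tr _]]. exact (wf_irrefl O lt wf a (tr _ _ _ H1 H2)).
  - destruct W as [wf _]. exact (wf_irrefl O lt wf a H1). Qed.

Lemma wf_min (O : Type) (lt : O -> O -> Prop) : well_founded lt ->
  forall (P : O -> Prop) a, P a -> exists c, P c /\ forall d, lt d c -> ~ P d.
Proof. intros wf P a Pa. apply NNPP; intro Hn.
  assert (forall x, ~ P x) as H.
  { intro x. induction (wf x) as [x _ IH]. intro Px. apply Hn. exists x; split; auto. }
  exact (H a Pa). Qed.

Lemma stab (O : Type) (lt : O -> O -> Prop) (reg : is_regular lt) (unc : uncountable O)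
  (N : O -> nat) (mono : forall a b, ole lt a b -> N a <= N b) :
  exists a0, forall b, ole lt a0 b -> N b <= N a0.
Proof.
  destruct reg as [W [_ reg]].
  apply NNPP; intro Hn.
  assert (H : forall a, exists b, N a < N b).
  { intro a. apply NNPP; intro H. apply Hn. exists a. intros b _. apply NNPP; intro H'. apply H. exists b. lia. }
  set (C := fun c => forall d, lt d c -> N d < N c).
  assert (Ccof : cofinal lt C).
  { intro a. destruct (H a) as [b Hb].
    destruct (wf_min O lt (proj1 W) (fun c => N a < N c) b Hb) as [c [Hc Hmin]].
    exists c. split.
    - intros d Hd. specialize (Hmin d Hd). lia.
    - destruct (ole_total O lt W a c) as [H1|H1]; auto. specialize (mono _ _ H1). lia. }
  destruct (reg C Ccof) as [f [finj [fsurj _]]].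
  apply unc.
  exists (fun o => N (proj1_sig (proj1_sig (constructive_indefinite_description _ (fsurj o))))).
  intros o1 o2 Heq.
  destruct (constructive_indefinite_description _ (fsurj o1)) as [x1 Hx1].
  destruct (constructive_indefinite_description _ (fsurj o2)) as [x2 Hx2].
  simpl in Heq. subst o1 o2. f_equal. apply sig_inj.
  destruct x1 as [c1 C1], x2 as [c2 C2]; simpl in *.
  destruct W as [wf [tr tot]].
  destruct (tot c1 c2) as [h|[h|h]]; auto.
  - specialize (C2 _ h). lia.
  - specialize (C1 _ h). lia.
Qed.

Fixpoint fin_enum (n : nat) : list (Fin.t n) :=
  match n with 0 => nil | S m => Fin.F1 :: map Fin.FS (fin_enum m) end.

Lemma fin_enum_In n (i : Fin.t n) : In i (fin_enum n).
Proof. induction i; simpl; auto. right; apply in_map; auto. Qed.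

Fixpoint vars (S : signature) (X : Type) (t : Tm S X) : list X :=
  match t with
  | var x => x :: nil
  | Defs.app o ts => flat_map (fun i => vars S X (ts i)) (fin_enum _)
  end.

Lemma occurs_vars (S : signature) (X : Type) (t : Tm S X) x : occurs x t <-> In x (vars S X t).
Proof. induction t as [y|o ts IH]; simpl.
  - split; [intros ->; auto | intros [->|[]]; auto].
  - rewrite in_flat_map. split.
    + intros [i Hi]. exists i. split; [apply fin_enum_In|]. apply IH; auto.
    + intros [i [_ Hi]]. exists i. apply IH; auto.
Qed.

Lemma r_irrel (O : Type) (lt : O -> O -> Prop) (X : O -> Type) (r : forall a b, ole lt a b -> X b -> X a)
  a b h1 h2 x : r a b h1 x = r a b h2 x.
Proof. rewrite (proof_irrelevance _ h1 h2). reflexivity. Qed.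

Lemma lim_neq (O : Type) (lt : O -> O -> Prop) (X : O -> Type) (r : forall a b, ole lt a b -> X b -> X a)
  (x y : lim r) : x <> y -> exists a, proj1_sig x a <> proj1_sig y a.
Proof. intro H. apply NNPP; intro H'. apply H. apply sig_inj.
  apply functional_extensionality_dep. intro a. apply NNPP; intro H2. apply H'; eauto. Qed.

Lemma agree_down (O : Type) (lt : O -> O -> Prop) (X : O -> Type) (r : forall a b, ole lt a b -> X b -> X a)
  (x y : lim r) a b (h : ole lt a b) : proj1_sig x b = proj1_sig y b -> proj1_sig x a = proj1_sig y a.
Proof. intro H. rewrite <- (proj2_sig x a b h), <- (proj2_sig y a b h), H. reflexivity. Qed.

Lemma sep1 (O : Type) (lt : O -> O -> Prop) (W : is_well_order lt) (a0 : O)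
  (X : O -> Type) (r : forall a b, ole lt a b -> X b -> X a) (x : lim r) (l : list (lim r)) :
  exists a, forall y, In y l -> x <> y -> proj1_sig x a <> proj1_sig y a.
Proof. induction l as [|y0 l IH].
  - exists a0. intros y [].
  - destruct IH as [a' Ha'].
    destruct (classic (x = y0)) as [E|E].
    + exists a'. intros y [<-|Hy] Hne; [congruence|auto].
    + destruct (lim_neq O lt X r x y0 E) as [b Hb].
      destruct (ole_ub O lt W a' b) as [c [h1 h2]]. exists c.
      intros y [<-|Hy] Hne Heq.
      * apply Hb. eapply agree_down; eauto.
      * apply (Ha' y Hy Hne). eapply agree_down; eauto.
Qed.

Lemma sep (O : Type) (lt : O -> O -> Prop) (W : is_well_order lt) (a0 : O)
  (X : O -> Type) (r : forall a b, ole lt a b -> X b -> X a) (l : list (lim r)) :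
  exists a, forall x y, In x l -> In y l -> proj1_sig x a = proj1_sig y a -> x = y.
Proof. induction l as [|x l IH].
  - exists a0. intros x y [].
  - destruct IH as [a1 H1]. destruct (sep1 O lt W a0 X r x l) as [a2 H2].
    destruct (ole_ub O lt W a1 a2) as [c [h1 h2]]. exists c.
    intros x1 y1 [<-|Hx] [<-|Hy] Heq; auto.
    + apply NNPP; intro Hne. apply (H2 y1 Hy Hne). eapply agree_down; eauto.
    + apply NNPP; intro Hne. apply (H2 x1 Hx (fun e => Hne (eq_sym e))). symmetry. eapply agree_down; eauto.
    + apply H1; auto. eapply agree_down; eauto.
Qed.

Lemma lim_inj (Th : theory) (O : Type) (lt : O -> O -> Prop) (W : is_well_order lt) (a0 : O)
  (X : O -> Type) (r : forall a b, ole lt a b -> X b -> X a) (t s : Tm (sig Th) (lim r)) :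
  (forall a, teq Th (Tm_map (fun x : lim r => proj1_sig x a) t) (Tm_map (fun x : lim r => proj1_sig x a) s)) ->
  teq Th t s.
Proof. intro H. destruct (sep O lt W a0 X r (vars _ _ t ++ vars _ _ s)) as [a Ha].
  apply (retract_inj Th _ _ (fun x : lim r => proj1_sig x a)); auto.
  intros x x' Hx Hx' E. apply Ha; auto; apply in_or_app;
  [destruct Hx as [Hy|Hy] | destruct Hx' as [Hy|Hy]]; [left|right|left|right]; apply occurs_vars; auto.
Qed.

Lemma NoDup_map_in (A B : Type) (f : A -> B) (l : list A) :
  NoDup (map f l) -> forall x y, In x l -> In y l -> f x = f y -> x = y.
Proof. induction l as [|a l IH]; simpl; [tauto|]. intro H. inversion H as [|? ? Hn Hd]; subst.
  intros x y [<-|Hx] [<-|Hy] E; auto.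
  - exfalso; apply Hn. rewrite E. apply in_map; auto.
  - exfalso; apply Hn. rewrite <- E. apply in_map; auto.
Qed.

Definition cdec (A : Type) (x y : A) : {x = y} + {x <> y} := excluded_middle_informative (x = y).

Lemma lim_surj (Th : theory) (no_drop : forall e : eqn Th, ~ drop_equation Th e)
  (O : Type) (lt : O -> O -> Prop) (reg : is_regular lt) (unc : uncountable O)
  (X : O -> Type) (r : forall a b, ole lt a b -> X b -> X a) (Hf : is_op_functor r)
  (u : forall a, Tm (sig Th) (X a))
  (Hu : forall a b (h : ole lt a b), teq Th (Tm_map (r a b h) (u b)) (u a)) :
  exists t : Tm (sig Th) (lim r), forall a, teq Th (Tm_map (fun x : lim r => proj1_sig x a) t) (u a).
Proof.
  pose proof (proj1 reg) as W.
  destruct Hf as [Hid Hcomp].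
  assert (Himg : forall a b (h : ole lt a b) z, occurs z (u a) <-> exists y, occurs y (u b) /\ r a b h y = z).
  { intros a b h z. rewrite <- (occurs_map _ _ _ (r a b h) (u b) z).
    split; apply (teq_occ Th no_drop); first [apply Hu | apply teq_sym; apply Hu]. }
  set (L := fun a => nodup (cdec (X a)) (vars _ _ (u a))).
  assert (HL : forall a z, In z (L a) <-> occurs z (u a)).
  { intros a z. unfold L. rewrite nodup_In, occurs_vars. tauto. }
  assert (Hincl : forall a b (h : ole lt a b), incl (L a) (map (r a b h) (L b))).
  { intros a b h z Hz. apply HL in Hz. apply (Himg a b h) in Hz. destruct Hz as [y [Hy <-]].
    apply in_map, HL, Hy. }
  set (N := fun a => length (L a)).
  assert (mono : forall a b, ole lt a b -> N a <= N b).
  { intros a b h. unfold N. rewrite <- (length_map (r a b h)). apply NoDup_incl_length; auto.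
    apply NoDup_nodup. }
  destruct (stab O lt reg unc N mono) as [a0 Ha0].
  assert (inj : forall c (h : ole lt a0 c) x w, occurs x (u c) -> occurs w (u c) -> r a0 c h x = r a0 c h w -> x = w).
  { intros c h x w Hx Hw E.
    assert (ND : NoDup (map (r a0 c h) (L c))).
    { apply (NoDup_incl_NoDup (l:=L a0)); [apply NoDup_nodup| |apply Hincl].
      rewrite length_map. apply Ha0; auto. }
    apply (NoDup_map_in _ _ _ _ ND); auto; apply HL; auto. }
  assert (exi : forall c (h : ole lt a0 c) y, occurs y (u a0) -> exists w, occurs w (u c) /\ r a0 c h w = y).
  { intros c h y Hy. apply (Himg a0 c h) in Hy. exact Hy. }
  set (P := fun y b (z : X b) => exists c (h1 : ole lt a0 c) (h2 : ole lt b c) w,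
              occurs w (u c) /\ r a0 c h1 w = y /\ r b c h2 w = z).
  assert (exP : forall y, occurs y (u a0) -> forall b, exists z, P y b z).
  { intros y Hy b. destruct (ole_ub O lt W a0 b) as [c [h1 h2]].
    destruct (exi c h1 y Hy) as [w [Hw1 Hw2]]. exists (r b c h2 w). exists c, h1, h2, w. auto. }
  assert (uqP : forall y, occurs y (u a0) -> forall b z1 z2, P y b z1 -> P y b z2 -> z1 = z2).
  { intros y Hy b z1 z2 [c1 [h11 [h12 [w1 [Hw1 [E1 <-]]]]]] [c2 [h21 [h22 [w2 [Hw2 [E2 <-]]]]]].
    destruct (ole_ub O lt W c1 c2) as [c [k1 k2]].
    assert (h0 : ole lt a0 c) by (eapply ole_trans; eauto).
    destruct (exi c h0 y Hy) as [w [Hw Ew]].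
    assert (F : forall ci (hi1 : ole lt a0 ci) (hi2 : ole lt b ci) wi (ki : ole lt ci c),
               occurs wi (u ci) -> r a0 ci hi1 wi = y -> r b ci hi2 wi = r b c (ole_trans O lt W _ _ _ hi2 ki) w).
    { intros ci hi1 hi2 wi ki Hwi Ei.
      assert (E : r ci c ki w = wi).
      { apply (inj ci hi1); auto.
        - apply (Himg ci c ki). eauto.
        - rewrite Hcomp with (hac := h0). congruence. }
      rewrite <- E. apply Hcomp. }
    rewrite (F c1 h11 h12 w1 k1), (F c2 h21 h22 w2 k2); auto. apply r_irrel. }
  set (fam := fun y (Hy : occurs y (u a0)) b => proj1_sig (constructive_indefinite_description _ (exP y Hy b))).
  assert (famP : forall y Hy b, P y b (fam y Hy b)).
  { intros. unfold fam. exact (proj2_sig (constructive_indefinite_description _ (exP y Hy b))). }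
  assert (compat : forall y Hy a b (h : ole lt a b), r a b h (fam y Hy b) = fam y Hy a).
  { intros y Hy a b h. apply (uqP y Hy a); [|apply famP].
    destruct (famP y Hy b) as [c [h1 [h2 [w [Hw [E1 E2]]]]]].
    exists c, h1, (ole_trans O lt W _ _ _ h h2), w. repeat split; auto.
    rewrite <- E2. symmetry. apply Hcomp. }
  assert (famV : forall y Hy c (h : ole lt a0 c), occurs (fam y Hy c) (u c) /\ r a0 c h (fam y Hy c) = y).
  { intros y Hy c h. destruct (famP y Hy c) as [c' [h1 [h2 [w [Hw [E1 E2]]]]]]. rewrite <- E2. split.
    - apply (Himg c c' h2). eauto.
    - rewrite Hcomp with (hac := h1). auto. }
  set (liftL := fun y Hy => exist (fun x : forall a, X a => forall a b (h : ole lt a b), r a b h (x b) = x a)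
                  (fam y Hy) (compat y Hy) : lim r).
  set (Q := fun y => occurs y (u a0)).
  set (t := Tm_map (fun p : {y : X a0 | Q y} => liftL (proj1_sig p) (proj2_sig p))
              (restr _ _ Q (u a0) (fun x H => H))).
  exists t.
  assert (A : forall c (h : ole lt a0 c), teq Th (Tm_map (fun x : lim r => proj1_sig x c) t) (u c)).
  { intros c h. unfold t. rewrite map_map. simpl.
    set (g := fun y => match excluded_middle_informative (occurs y (u a0)) with
                       | left H => var (fam y H c) | right _ => u c end).
    rewrite <- (restr_subst _ _ _ Q (u a0) (fun x H => H) g).
    2:{ intros y Hy Hy'. unfold g. destruct excluded_middle_informative as [H|H]; [|contradiction].
        simpl. rewrite (proof_irrelevance _ H Hy). reflexivity. }
    apply teq_sym.
    pose proof (teq_subst Th _ _ g _ _ (Hu a0 c h)) as T.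
    rewrite subst_map in T.
    rewrite (subst_ext_occ _ _ _ _ (fun x => var x) (u c)) in T.
    { rewrite subst_var_id in T. exact T. }
    intros w Hw. unfold g. destruct excluded_middle_informative as [H|H].
    - f_equal. destruct (famV (r a0 c h w) H c h) as [F1 F2]. apply (inj c h); [exact F1|exact Hw|rewrite F2; reflexivity].
    - exfalso. apply H. apply (proj2 (Himg a0 c h _)). exists w. split; [exact Hw|reflexivity]. }
  intro a. destruct (ole_ub O lt W a0 a) as [c [h1 h2]].
  eapply teq_trans; [|apply (Hu a c h2)].
  replace (Tm_map (fun x : lim r => proj1_sig x a) t)
    with (Tm_map (r a c h2) (Tm_map (fun x : lim r => proj1_sig x c) t)).
  - apply teq_map. apply A; auto.
  - rewrite map_map. f_equal. apply functional_extensionality. intro x. apply (proj2_sig x).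
Qed.

Theorem mainTheorem2 (Th : theory)
  (no_drop : forall e : eqn Th, ~ drop_equation Th e) :
  preserves_pullbacks_of_monos Th /\
  preserves_monos Th /\
  (forall (O : Type) (lt : O -> O -> Prop),
      is_regular lt -> uncountable O ->
      forall (X : O -> Type) (r : forall a b, ole lt a b -> X b -> X a),
        is_op_functor r -> preserves_limit Th r).
Proof.
  split; [apply pb_ok; auto|]. split; [apply monos_ok|].
  intros O lt reg unc X r Hf. split.
  - destruct reg as [W [[[a0 _] _] _]]. intros t s H. apply (lim_inj Th O lt W a0 X r); auto.
  - intros u Hu. apply (lim_surj Th no_drop O lt reg unc X r Hf u Hu).
Qed.
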